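(* $\displaystyle\lim_{n\to\infty}\frac{l(2n+1)}{l(2n)}=5.$
   Context: For $n\ge 0$, $c(n)=\sum_{i=0}^{n}\left(\binom{n}{i}\bmod 2\right)2^{i}$, the integer whose binary digits form the $n$-th row of Pascal's triangle modulo $2$ (so $c(0),c(1),\dots=1,3,5,15,17,51,85,255,\dots$); one has $c(2n)\equiv1\pmod4$, and $l(n)=\frac{c(2n)-1}{4}$. (Stated in the paper as a conjecture of R. Stephan and proved there.) *)

(* Defs.v *)
From mathcomp Require Import all_boot.
From Stdlib Require Import Reals.

Definition c (n : nat) : nat := \sum_(0 <= i < n.+1) ('C(n, i) %% 2) * 2 ^ i.

(* l(n) = (c(2n) - 1)/4  (exact since c(2n) = 1 mod 4) *)
Definition l (n : nat) : nat := (c (2 * n) - 1) %/ 4.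

(* Main.v *)
Require Import Defs.
From mathcomp Require Import all_boot.
From Stdlib Require Import Reals Lra Lia ZArith.
From mathcomp Require Import zify.

Lemma bin_even n i : ~~ (4 %| i) -> 'C(4 * n, i) %% 2 = 0.
Proof.
move=> h4.
case: i h4 => [|k] h4; first by [].
have E := mul_bin_diag (4 * n) k.
have H : 4 %| k.+1 * 'C(4 * n, k.+1).
  by rewrite -E; apply: dvdn_mulr; apply: dvdn_mulr.
apply/eqP; rewrite -/(2 %| _).
case: (boolP (odd k.+1)) => ho.
  have H2 : 2 %| k.+1 * 'C(4 * n, k.+1) by apply: dvdn_trans H.
  by rewrite Gauss_dvdr // in H2; rewrite coprime2n ho.
have [j ej] : exists j, k.+1 = 2 * j.
  by exists (k.+1)./2; rewrite -[in LHS](odd_double_half k.+1) (negbTE ho) add0n -mul2n.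
rewrite ej in H h4 *.
have H2 : 2 %| j * 'C(4 * n, 2 * j).
  by rewrite -(@dvdn_pmul2l 2) // mulnA.
have hj : odd j.
  apply/negP => /negP ej2; move/negP: h4; apply.
  have [m em] : exists m, j = 2 * m.
    by exists j./2; rewrite -[in LHS](odd_double_half j) (negbTE ej2) add0n -mul2n.
  by rewrite em mulnA dvdn_mulr.
by rewrite Gauss_dvdr // in H2; rewrite coprime2n hj.
Qed.

Definition a n i := 'C(4 * n, i) %% 2.

Lemma c4 n : c (4 * n) = \sum_(0 <= i < 4 * n + 1) a n i * 2 ^ i.
Proof. by rewrite /c addn1. Qed.

Lemma step n i : 'C(4 * n + 2, i) %% 2 * 2 ^ i =
  a n i * 2 ^ i + (if 2 <= i then a n (i - 2) * 2 ^ i else 0).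
Proof.
case: i => [|[|j]].
- by rewrite !bin0 /a bin0.
- rewrite bin1 /a bin1 /=; lia.
- rewrite /= subn2 /= /a.
  have -> : 4 * n + 2 = (4 * n).+2 by lia.
  rewrite !binS.
  have h : 'C(4 * n, j.+2) %% 2 = 0 \/ 'C(4 * n, j) %% 2 = 0.
    case: (boolP (4 %| j)) => hj.
      left; apply: bin_even; apply/negP => h2.
      have : 4 %| j.+2 - j by rewrite dvdn_sub.
      by rewrite subSn // subSn // subnn.
    by right; apply: bin_even.
  rewrite -mulnDl; congr (_ * _).
  case: h => h; lia.
Qed.

Lemma c4_2 n : c (4 * n + 2) = 5 * c (4 * n).
Proof.
rewrite {1}/c.
rewrite (eq_bigr _ (fun i _ => step n i)) big_split /=.
have -> : (4 * n + 2).+1 = (4 * n + 1).+2 by lia.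
have -> : \sum_(0 <= i < (4 * n + 1).+2) a n i * 2 ^ i = c (4 * n).
  rewrite c4 big_nat_recr //= big_nat_recr //=.
  rewrite /a (@bin_small _ (4 * n + 1).+1); last lia.
  rewrite (@bin_small _ (4 * n + 1)); last lia.
  by rewrite !mul0n !addn0.
have -> : \sum_(0 <= i < (4 * n + 1).+2) (if 1 < i then a n (i - 2) * 2 ^ i else 0)
   = 4 * c (4 * n).
  rewrite big_ltn // big_ltn // /= !add0n.
  rewrite (big_addn 0 _ 2) /=.
  have -> : (4 * n + 1).+2 - 2 = 4 * n + 1 by lia.
  rewrite c4 big_distrr /=.
  apply: eq_bigr => i _.
  have -> : 1 < i + 2 by lia.
  rewrite addnK Nat.pow_add_r; change (Nat.pow 2 2) with 4; lia.
lia.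
Qed.

Lemma c4_mod n : c (4 * n) %% 4 = 1.
Proof.
rewrite c4 big_ltn; last lia.
have -> : a n 0 = 1 by rewrite /a bin0.
have : 4 %| \sum_(1 <= i < 4 * n + 1) a n i * 2 ^ i.
  rewrite big_nat_cond; apply: dvdn_sum => i /andP [/andP [hi _] _].
  case: i hi => [|[|i]] // _.
    by rewrite /a bin_even.
  rewrite Nat.pow_succ_r' Nat.pow_succ_r'.
  apply/dvdnP; exists (a n i.+2 * 2 ^ i); lia.
move=> /dvdnP [k ->]; change (Nat.pow 2 0) with 1; lia.
Qed.

Lemma powE m : Nat.pow 2 m = expn 2 m.
Proof. by elim: m => //= m IH; rewrite expnS IH. Qed.

Lemma c4_ge n : 4 * n + 1 <= c (4 * n).
Proof.
rewrite c4 addn1 big_nat_recr //= /a binn powE.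
have := @ltn_expl 2 (4 * n) (isT : 1 < 2).
lia.
Qed.

Lemma lrel n : l (2 * n + 1) = 5 * l (2 * n) + 1 /\ n <= l (2 * n).
Proof.
rewrite /l.
have -> : 2 * (2 * n + 1) = 4 * n + 2 by lia.
have -> : 2 * (2 * n) = 4 * n by lia.
rewrite c4_2.
have h1 := c4_mod n; have h2 := c4_ge n.
move: h1 h2; move: (c (4 * n)) => x h1 h2.
split; lia.
Qed.

Theorem mainTheorem10 :
  Un_cv (fun n : nat => (INR (l (2 * n + 1)) / INR (l (2 * n)))%R) 5%R.
Proof.
move=> eps heps.
have [hup _] := archimed (/ eps).
have hinv : (0 < / eps)%R by apply: Rinv_0_lt_compat.
set z := up (/ eps) in hup.
have zpos : (0 <= z)%Z.
  apply: le_IZR; lra.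
exists (Z.to_nat z).+1 => n hn.
have [hrel hge] := lrel n.
rewrite hrel.
have hnz : (IZR z <= INR n)%R.
  rewrite -(Z2Nat.id z zpos) -INR_IZR_INZ; apply: le_INR; lia.
have hq : (INR n <= INR (l (2 * n)))%R by apply: le_INR; lia.
have hq0 : (0 < INR (l (2 * n)))%R by apply: lt_0_INR; lia.
rewrite /R_dist plus_INR mult_INR.
have -> : INR 5 = 5%R by simpl; ring.
have -> : (INR 1 = 1)%R by [].
set q := INR (l (2 * n)) in hq hq0 *.
have -> : ((5 * q + 1) / q - 5 = / q)%R by field; lra.
rewrite Rabs_right; last by apply: Rle_ge; apply: Rlt_le; apply: Rinv_0_lt_compat.
have : (/ eps < q)%R by lra.
move=> h.
have := Rinv_lt_contravar (/ eps) q (Rmult_lt_0_compat _ _ hinv hq0) h.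
by rewrite Rinv_inv.
Qed.
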